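(* Let $S$ be an intra-regular $\Gamma$-AG$^{**}$-groupoid. Then every two-sided $\Gamma$-ideal of $S$ is $\Gamma$-prime if and only if $S$ is $\Gamma$-totally ordered under inclusion, i.e. for any two-sided $\Gamma$-ideals $P,Q$ of $S$, either $P\subseteq Q$ or $Q\subseteq P$.
   Context: Let $S$ and $\Gamma$ be nonempty sets with a map $S\times\Gamma\times S\to S$, $(x,\gamma,y)\mapsto x\gamma y$. $S$ is a $\Gamma$-AG-groupoid if $(x\gamma y)\delta z=(z\gamma y)\delta x$ for all $x,y,z\in S$, $\gamma,\delta\in\Gamma$; it is a $\Gamma$-AG$^{**}$-groupoid if moreover $a\alpha(b\beta c)=b\alpha(a\beta c)$ for all $a,b,c\in S$, $\alpha,\beta\in\Gamma$. For subsets $A,B\subseteq S$, $A\Gamma B=\{a\gamma b: a\in A,\gamma\in\Gamma,b\in B\}$. $S$ is intra-regular if for every $a\in S$ there exist $x,y\in S$ and $\beta,\gamma,\delta\in\Gamma$ with $a=(x\beta(a\delta a))\gamma y$. A nonempty subset $A$ is a two-sided $\Gamma$-ideal if $S\Gamma A\subseteq A$ and $A\Gamma S\subseteq A$. A two-sided $\Gamma$-ideal $P$ is $\Gamma$-prime if for all two-sided $\Gamma$-ideals $A,B$ of $S$, $A\Gamma B\subseteq P$ implies $A\subseteq P$ or $B\subseteq P$. *)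

(* Defs.v *)
Definition gamma_AG {S G : Type} (op : S -> G -> S -> S) : Prop :=
  forall (x y z : S) (g d : G), op (op x g y) d z = op (op z g y) d x.

Definition gamma_AGss {S G : Type} (op : S -> G -> S -> S) : Prop :=
  gamma_AG op /\
  forall (a b c : S) (al be : G), op a al (op b be c) = op b al (op a be c).

Definition intra_regular {S G : Type} (op : S -> G -> S -> S) : Prop :=
  forall a : S, exists (x y : S) (b g d : G), a = op (op x b (op a d a)) g y.

Definition gprod {S G : Type} (op : S -> G -> S -> S) (A B : S -> Prop) : S -> Prop :=
  fun s => exists (a : S) (g : G) (b : S), A a /\ B b /\ s = op a g b.

Definition subset {S : Type} (A B : S -> Prop) : Prop := forall x, A x -> B x.

Definition two_sided_ideal {S G : Type} (op : S -> G -> S -> S) (A : S -> Prop) : Prop :=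
  (exists a, A a) /\
  subset (gprod op (fun _ => True) A) A /\
  subset (gprod op A (fun _ => True)) A.

Definition gamma_prime {S G : Type} (op : S -> G -> S -> S) (P : S -> Prop) : Prop :=
  two_sided_ideal op P /\
  forall A B : S -> Prop, two_sided_ideal op A -> two_sided_ideal op B ->
    subset (gprod op A B) P -> subset A P \/ subset B P.

Definition gamma_totally_ordered {S G : Type} (op : S -> G -> S -> S) : Prop :=
  forall P Q : S -> Prop, two_sided_ideal op P -> two_sided_ideal op Q ->
    subset P Q \/ subset Q P.

(* Main.v *)
Require Import Defs.

Theorem mainTheorem18 (S G : Type) (s0 : S) (g0 : G) (op : S -> G -> S -> S)
  (HAG : gamma_AGss op) (Hir : intra_regular op) :
  (forall P : S -> Prop, two_sided_ideal op P -> gamma_prime op P) <->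
  gamma_totally_ordered op.
Proof.
  split.
  - intros H P Q HP HQ.
    destruct HP as [[p Pp] [PL PR]]. destruct HQ as [[q Qq] [QL QR]].
    assert (HI : two_sided_ideal op (fun s => P s /\ Q s)).
    { split; [|split].
      - exists (op p g0 q). split.
        + apply PR. exists p, g0, q. auto.
        + apply QL. exists p, g0, q. auto.
      - intros s [a [g [b [_ [[Pb Qb] ->]]]]]. split.
        + apply PL. exists a, g, b. auto.
        + apply QL. exists a, g, b. auto.
      - intros s [a [g [b [[Pa Qa] [_ ->]]]]]. split.
        + apply PR. exists a, g, b. auto.
        + apply QR. exists a, g, b. auto. }
    destruct (H _ HI) as [_ Hp].
    assert (Hsub : subset (gprod op P Q) (fun s => P s /\ Q s)).
    { intros s [a [g [b [Pa [Qb ->]]]]]. split.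
      + apply PR. exists a, g, b. auto.
      + apply QL. exists a, g, b. auto. }
    destruct (Hp P Q (conj (ex_intro _ p Pp) (conj PL PR))
                    (conj (ex_intro _ q Qq) (conj QL QR)) Hsub) as [h|h].
    + left. intros x Px. exact (proj2 (h x Px)).
    + right. intros x Qx. exact (proj1 (h x Qx)).
  - intros Htot P HP. split; [exact HP|].
    destruct HP as [_ [PL PR]].
    assert (key : forall A, subset (gprod op A A) P -> subset A P).
    { intros A HA a Aa. destruct (Hir a) as [x [y [b [g [d Ea]]]]].
      rewrite Ea. apply PR. exists (op x b (op a d a)), g, y. repeat split; auto.
      apply PL. exists x, b, (op a d a). repeat split; auto.
      apply HA. exists a, d, a. auto. }
    intros A B HA HB Hs.
    destruct (Htot A B HA HB) as [h|h].
    + left. apply key. intros s [a [g [c [Aa [Ac ->]]]]].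
      apply Hs. exists a, g, c. auto.
    + right. apply key. intros s [a [g [c [Ba [Bc ->]]]]].
      apply Hs. exists a, g, c. auto.
Qed.
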